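(* For every real $\alpha$ with $0<\alpha<1/2$ there exists a constant $C_\alpha$ such that for every positive integer $N$, \[ \max_{|a_1|^2+\cdots+|a_N|^2=1}\ \sum_{m,n\le N}\frac{a_m\overline{a_n}\,(m,n)^{2\alpha}}{(mn)^{\alpha}} \le C_\alpha N^{1-2\alpha}, \] where the maximum is over complex vectors $(a_1,\dots,a_N)$ of Euclidean norm $1$ and the sum runs over positive integers $m,n\le N$.
   Context: $(m,n)$ denotes the greatest common divisor of the positive integers $m$ and $n$. *)

(* Defs.v *)
From HB Require Import structures.
From mathcomp Require Import all_boot all_order all_algebra.
From mathcomp Require Import all_classical all_reals all_analysis.
From mathcomp Require Import complex.
Set Implicit Arguments. Unset Strict Implicit. Unset Printing Implicit Defensive.
Import Order.TTheory GRing.Theory Num.Theory.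
Local Open Scope ring_scope.

Definition gcd_kernel (R : realType) (alpha : R) (m n : nat) : R :=
  (gcdn m n)%:R `^ (2 * alpha) / ((m * n)%:R `^ alpha).

(* Main.v *)
Require Import Defs.
From HB Require Import structures.
From mathcomp Require Import all_boot all_order all_algebra.
From mathcomp Require Import all_classical all_reals all_analysis.
From mathcomp Require Import complex.
From mathcomp Require Import ring lra zify.
Import Order.TTheory GRing.Theory Num.Theory.
Local Open Scope ring_scope.
Local Open Scope complex_scope.
From mathcomp Require Import zify.
Local Open Scope nat_scope.
Definition tau (n : nat) : nat := (\sum_(e < n.+1) (e %| n))%N.

Lemma sum_eq1_le (K c : nat) : (\sum_(e < K) (nat_of_ord e == c) = (c < K))%N.
Proof.
elim: K => [|K IH]; first by rewrite big_ord0.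
rewrite big_ord_recr /= IH; case: (ltngtP c K) => h; rewrite ?h ?eqxx /=; lia.
Qed.

Lemma tau1 : tau 1 = 1%N.
Proof. by rewrite /tau big_ord_recr /= big_ord_recr /= big_ord0. Qed.

Lemma tauM (a b : nat) : (0 < a)%N -> (0 < b)%N -> (tau (a * b) <= tau a * tau b)%N.
Proof.
move=> a0 b0.
have step : (tau (a * b) <= \sum_(e < (a * b).+1) \sum_(x < a.+1) \sum_(y < b.+1)
   ((x %| a) && (y %| b) && (nat_of_ord e == x * y)))%N.
  rewrite /tau; apply: leq_sum => e _.
  case eab: (nat_of_ord e %| a * b) => //.
  set g := gcdn e a.
  have ga : (g < a.+1)%N by rewrite ltnS dvdn_leq // dvdn_gcdr.
  have gpos : (0 < g)%N by rewrite gcdn_gt0 a0 orbT.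
  have hb : (e %/ g %| b)%N.
    have h1 : (nat_of_ord e %| g * b).
      by rewrite /g muln_gcdl dvdn_gcd dvdn_mulr ?dvdnn // eab.
    move: h1; rewrite -{1}(divnK (dvdn_gcdl e a)) -/g mulnC dvdn_pmul2l //.
  have yb : (e %/ g < b.+1)%N by rewrite ltnS dvdn_leq.
  rewrite (bigD1 (Ordinal ga)) //= (bigD1 (Ordinal yb)) //=.
  have eqe : (nat_of_ord e == g * (e %/ g)) by apply/eqP; rewrite [RHS]mulnC divnK // dvdn_gcdl.
  have ga' : (g %| a) by rewrite dvdn_gcdr.
  by rewrite ga' hb eqe.
apply: (leq_trans step).
rewrite exchange_big /=.
rewrite /tau big_distrl /=; apply: leq_sum => x _.
rewrite exchange_big /= big_distrr /=; apply: leq_sum => y _.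
case: (x %| a)%N; case: (y %| b)%N => /=; rewrite ?muln1 ?mul1n ?muln0 ?mul0n;
 try by rewrite big1.
by rewrite sum_eq1_le; case: (_ < _)%N.
Qed.

Lemma tau_pexp (p k : nat) : prime p -> (tau (p ^ k) <= k.+1)%N.
Proof.
move=> pp; rewrite /tau.
apply: (@leq_trans (\sum_(e < (p ^ k).+1) \sum_(j < k.+1) (nat_of_ord e == p ^ j))%N).
  apply: leq_sum => e _.
  case: (dvdn_pfactor e k pp) => // -[j jk ->].
  have jk' : (j < k.+1)%N by rewrite ltnS.
  by rewrite (bigD1 (Ordinal jk')) //= eqxx.
rewrite exchange_big /=.
apply: (@leq_trans (\sum_(j < k.+1) 1)%N); last by rewrite sum1_card card_ord.
apply: leq_sum => j _; by rewrite sum_eq1_le; case: (_ < _)%N.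
Qed.

Local Open Scope ring_scope.
Lemma bern_nat (R : realType) (b : R) (k : nat) : 1 <= b -> 1 + k%:R * (b - 1) <= b ^+ k.
Proof.
move=> b1; elim: k => [|k IH]; first by rewrite expr0 mul0r addr0.
rewrite exprS -natr1.
have h0 : 0 <= b - 1 by rewrite subr_ge0.
have hk : 0 <= k%:R :> R by [].
have : b * (1 + k%:R * (b - 1)) <= b * b ^+ k by rewrite ler_wpM2l // (le_trans _ b1).
have := mulr_ge0 hk (mulr_ge0 h0 h0).
move=> h2 h3; apply: le_trans h3; nra.
Qed.

Definition cnt (P0 n : nat) : nat := (\sum_(q < P0) (prime q && (q %| n)%N))%N.

Lemma cnt_le (P0 n : nat) : (cnt P0 n <= P0)%N.
Proof.
rewrite /cnt; apply: (@leq_trans (\sum_(q < P0) 1)%N); last by rewrite sum1_card card_ord.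
by apply: leq_sum => q _; case: (_ && _).
Qed.

Lemma cnt_dvd (P0 m n : nat) : (m %| n)%N -> (cnt P0 m <= cnt P0 n)%N.
Proof.
move=> mn; apply: leq_sum => q _.
case pq: (prime q) => //=; case qm: (q %| m)%N => //=.
by rewrite (dvdn_trans qm mn).
Qed.

Lemma cnt_new (P0 p m n : nat) : prime p -> (p < P0)%N -> (p %| n)%N -> ~~ (p %| m)%N ->
  (m %| n)%N -> ((cnt P0 m).+1 <= cnt P0 n)%N.
Proof.
move=> pp pP pn pm mn.
rewrite /cnt -addn1.
have -> : 1%N = (\sum_(q < P0) (nat_of_ord q == p))%N by rewrite sum_eq1_le pP.
rewrite -big_split /=; apply: leq_sum => q _.
case: (eqVneq (nat_of_ord q) p) => [->|_]; first by rewrite pp pn (negbTE pm).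
rewrite addn0; case: (prime q) => //=; case qm: (q %| m)%N => //=.
by rewrite (dvdn_trans qm mn).
Qed.

Lemma tau_bound (R : realType) (u : R) : 0 < u ->
  exists D : R, 0 < D /\ forall n : nat, (0 < n)%N -> (tau n)%:R <= D * n%:R `^ u.
Proof.
move=> u0.
set b : R := 2 `^ u.
have b1 : 1 < b.
  have := @gt0_ltr_powR R u u0 1 2; rewrite powR1 /b; apply; rewrite ?nnegrE //=; lra.
set M : R := 1 + (b - 1)^-1.
have bpos : 0 < b - 1 by rewrite subr_gt0.
have M1 : 1 <= M by rewrite /M lerDl invr_ge0 ltW.
have kb : forall k : nat, (k.+1)%:R <= M * b ^+ k.
  move=> k; have hb := @bern_nat _ b k (ltW b1).
  have hMb : M * (1 + k%:R * (b - 1)) <= M * b ^+ k by rewrite ler_wpM2l // (le_trans ler01 M1).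
  apply: le_trans hMb.
  rewrite /M; set c := (b - 1)^-1.
  have hc : c * (b - 1) = 1 by rewrite mulVf // gt_eqF.
  have -> : (1 + c) * (1 + k%:R * (b - 1)) = 1 + k%:R * (b - 1) + c + k%:R * (c * (b - 1)) by ring.
  rewrite hc -natr1.
  have : 0 <= c by rewrite invr_ge0 ltW.
  have : 0 <= k%:R * (b - 1) by rewrite mulr_ge0 // ltW.
  lra.
set n0 : nat := (Num.truncn (u^-1)).+1.
set P0 : nat := (2 ^ n0)%N.
have bigp : forall p : nat, (P0 <= p)%N -> 2 <= p%:R `^ u.
  move=> p hp.
  have : (2 ^ n0)%:R `^ u <= p%:R `^ u.
    by apply: ge0_ler_powR; [exact: ltW | by rewrite nnegrE | by rewrite nnegrE | rewrite ler_nat].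
  apply: le_trans.
  rewrite natrX -powR_mulrn // -powRrM.
  rewrite -{1}(powRr1 (ler0n _ 2)).
  apply: ler_powR; first by rewrite ler1n.
  have := truncnS_gt (u^-1); rewrite -/n0 => h.
  have hu : u^-1 * u = 1 by rewrite mulVf // gt_eqF.
  have : 0 < u^-1 by rewrite invr_gt0.
  nra.
have pge : forall p : nat, (2 <= p)%N -> b <= p%:R `^ u.
  move=> p hp; apply: ge0_ler_powR; [exact: ltW | by rewrite nnegrE | by rewrite nnegrE | ].
  by rewrite (@ler_nat R 2).
have main : forall n : nat, (0 < n)%N -> (tau n)%:R <= M ^+ (cnt P0 n) * n%:R `^ u.
  elim/ltn_ind => n IH n0'.
  case: (ltngtP n 1) => [|n1|->]; first by rewrite ltnS leqn0 (gtn_eqF n0').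
  - have pp := pdiv_prime n1.
    set p := pdiv n in pp *.
    have [m cpm nE] := pfactor_coprime pp n0'.
    set k := logn p n in nE.
    have p2 : (2 <= p)%N by apply: prime_gt1.
    have kpos : (0 < k)%N by rewrite logn_gt0 mem_primes pp n0' pdiv_dvd.
    have m0 : (0 < m)%N by move: n0'; rewrite nE muln_gt0 => /andP[].
    have pk2 : (1 < p ^ k)%N.
      by apply: (leq_trans p2); rewrite -{1}(expn1 p) leq_pexp2l // ltnW.
    have mn : (m < n)%N by rewrite nE -{1}(muln1 m) ltn_pmul2l.
    have mdn : (m %| n)%N by rewrite nE dvdn_mulr.
    have npm : ~~ (p %| m)%N by rewrite -prime_coprime.
    have htau : (tau n)%:R <= (tau m)%:R * (k.+1)%:R :> R.
      rewrite -natrM ler_nat nE.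
      apply: (leq_trans (tauM _ _ m0 (ltnW pk2))).
      by rewrite leq_mul2l tau_pexp // orbT.
    have nu : n%:R `^ u = m%:R `^ u * (p%:R `^ u) ^+ k.
      rewrite nE natrM powRM // natrX -powR_mulrn // powRAC powR_mulrn //.
    have IHm := IH m mn m0.
    have hpu0 : 0 <= p%:R `^ u :> R by apply: powR_ge0.
    apply: (le_trans htau); rewrite nu.
    case: (ltnP p P0) => hP.
    + have hc := @cnt_new P0 p m n pp hP (pdiv_dvd n) npm mdn.
      have hk : (k.+1)%:R <= M * (p%:R `^ u) ^+ k.
        apply: (le_trans (kb k)); apply: ler_wpM2l; first exact: (le_trans ler01 M1).
        by apply: lerXn2r; rewrite ?nnegrE ?(le_trans ler01 (ltW b1)) // pge.
      apply: (le_trans (ler_pM _ _ IHm hk)) => //.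
      rewrite mulrACA -exprSr; apply: ler_wpM2r.
        by rewrite mulr_ge0 ?powR_ge0 // exprn_ge0.
      by apply: ler_weXn2l => //; exact: M1.
    + have hc := @cnt_dvd P0 m n mdn.
      have hk : (k.+1)%:R <= (p%:R `^ u) ^+ k :> R.
        apply: (@le_trans _ _ (2 ^+ k)).
          by rewrite -natrX ler_nat ltn_expl.
        by apply: lerXn2r; rewrite ?nnegrE // bigp.
      apply: (le_trans (ler_pM _ _ IHm hk)) => //.
      rewrite mulrA; apply: ler_wpM2r; first by rewrite exprn_ge0.
      apply: ler_wpM2r; first by rewrite powR_ge0.
      by apply: ler_weXn2l => //; exact: M1.
  - by rewrite tau1 powR1 mulr1 exprn_ege1.
exists (M ^+ P0); split; first by rewrite exprn_gt0 // (lt_le_trans ltr01 M1).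
move=> n n0'; apply: (le_trans (main n n0')); apply: ler_wpM2r; first exact: powR_ge0.
apply: ler_weXn2l; [exact: M1 | exact: cnt_le].
Qed.
Lemma eqle (R : numDomainType) (x y : R) : x = y -> x <= y.
Proof. by move->. Qed.

Lemma ln_le_sub1 (R : realType) (y : R) : 0 < y -> ln y <= y - 1.
Proof.
move=> y0; have := @le_ln1Dx R (y - 1).
rewrite (_ : 1 + (y - 1) = y); last by ring.
by apply; lra.
Qed.

Lemma bernoulli_powR (R : realType) (A r : R) : 0 < A -> 0 <= r <= 1 ->
  A `^ r <= r * A + (1 - r).
Proof.
move=> A0 /andP[r0 r1].
set c := r * A + (1 - r).
have c0 : 0 < c.
  rewrite /c; case: (ltrP 0 r) => hr.
    by apply: ltr_pwDl; [rewrite mulr_gt0 | rewrite subr_ge0].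
  have -> : r = 0 by apply/eqP; rewrite eq_le hr r0.
  by rewrite mul0r add0r subr0.
rewrite /powR gt_eqF // -[c in _ <= c](@lnK R c) ?posrE // ler_expR.
have hX : ln A - ln c <= A * c^-1 - 1.
  by rewrite -ln_div ?posrE // ln_le_sub1 // divr_gt0.
have hY : - ln c <= c^-1 - 1.
  by rewrite -lnV ?posrE // ln_le_sub1 // invr_gt0.
have hc : c * c^-1 = 1 by rewrite mulfV // gt_eqF.
have h1 := ler_wpM2l r0 hX.
have h2 : 0 <= 1 - r by rewrite subr_ge0.
have h3 := ler_wpM2l h2 hY.
move: hc; rewrite /c => hc.
nra.
Qed.

Lemma sum_pow_le (R : realType) (s : R) (M : nat) : 0 < s < 1 ->
  \sum_(j < M) ((j.+1)%:R `^ s)^-1 <= M%:R `^ (1 - s) / (1 - s).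
Proof.
move=> /andP[s0 s1]; have r0 : 0 < 1 - s by rewrite subr_gt0.
elim: M => [|M IH].
  by rewrite big_ord0 divr_ge0 ?powR_ge0 // ltW.
rewrite big_ord_recr /=.
apply: (le_trans (lerD IH (lexx _))).
set m : R := M%:R.
have m0 : 0 <= m by [].
have hm1 : 0 < m + 1 by rewrite ltr_pwDr.
set Q := (m + 1) `^ s.
have Q0 : 0 < Q by apply: powR_gt0.
have hQ' : (m + 1) `^ (1 - s) = (m + 1) / Q.
  by rewrite powRB ?(gt_eqF hm1) ?implybT // powRr1 // ltW.
rewrite -natr1 -/m hQ'.
have key : m `^ (1 - s) <= (m + 1 - (1 - s)) / Q.
  case: (eqVneq M 0%N) => [M0|Mn0].
    rewrite /m M0 powR0 ?gt_eqF // add0r subKr.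
    by rewrite divr_ge0 // ltW.
  have mpos : 0 < m by rewrite ltr0n lt0n.
  set A := m / (m + 1).
  have A0 : 0 < A by rewrite divr_gt0.
  have hb := @bernoulli_powR R A (1 - s) A0.
  have : 0 <= 1 - s <= 1 by rewrite (ltW r0) /= lerBlDl lerDr ltW.
  move/hb => {}hb.
  have mE : m = A * (m + 1) by rewrite /A mulfVK // gt_eqF.
  rewrite [X in X `^ _]mE powRM ?(ltW A0) ?(ltW hm1) //.
  rewrite hQ'.
  apply: (le_trans (ler_wpM2r _ hb)); first by rewrite divr_ge0 // ltW.
  rewrite /A; apply: eqle.
  by field; rewrite gt_eqF // gt_eqF.
have : m `^ (1 - s) / (1 - s) + Q^-1 <= (m + 1) / Q / (1 - s).
  rewrite -(ler_pM2r r0) mulrDl divfK ?gt_eqF // divfK ?gt_eqF //.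
  apply: (le_trans (lerD key (lexx _))).
  apply: eqle.
  field; rewrite !gt_eqF //.
by [].
Qed.
Lemma sum_pow1_le (R : realType) (t : R) (M : nat) : 0 < t <= 1 ->
  \sum_(j < M) ((j.+1)%:R `^ (1 + t))^-1 <= 1 + t^-1.
Proof.
move=> /andP[t0 t1].
have inv0 : 0 <= t^-1 by rewrite invr_ge0 ltW.
case: M => [|M]; first by rewrite big_ord0; lra.
suff H : \sum_(j < M.+1) ((j.+1)%:R `^ (1 + t))^-1 <= 1 + (1 - ((M.+1)%:R `^ t)^-1) / t.
  apply: (le_trans H); rewrite lerD2l -[X in _ <= X]mul1r ler_wpM2r //.
elim: M => [|M IH].
  by rewrite big_ord_recr big_ord0 /= add0r !powR1 invr1 subrr mul0r addr0.
rewrite big_ord_recr /=.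
apply: (le_trans (lerD IH (lexx _))).
set m : R := (M.+1)%:R.
have m0 : 0 < m by rewrite ltr0n.
have hm1 : 0 < m + 1 by rewrite ltr_pwDr.
rewrite -[(M.+2)%:R]natr1 -/m.
set P := m `^ t. set Q := (m + 1) `^ t.
have P0 : 0 < P by apply: powR_gt0.
have Q0 : 0 < Q by apply: powR_gt0.
have hQ : (m + 1) `^ (1 + t) = (m + 1) * Q.
  by rewrite powRD ?(gt_eqF hm1) ?implybT // powRr1 // ltW.
rewrite hQ.
have key : P * (m + 1) <= (m + 1 - t) * Q.
  set A := m / (m + 1).
  have A0 : 0 < A by rewrite divr_gt0.
  have hb := @bernoulli_powR R A t A0.
  have : 0 <= t <= 1 by rewrite (ltW t0) t1.
  move/hb => {}hb.
  have mE : m = A * (m + 1) by rewrite /A mulfVK // gt_eqF.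
  rewrite /P [X in X `^ _]mE powRM ?(ltW A0) ?(ltW hm1) // -/Q.
  have : A `^ t * Q * (m + 1) <= (t * A + (1 - t)) * Q * (m + 1).
    by rewrite ler_wpM2r ?ler_wpM2r // ltW.
  move=> h; apply: (le_trans h); apply: eqle; rewrite /A.
  by field; rewrite gt_eqF.
suff hh : (1 - P^-1) / t + ((m + 1) * Q)^-1 <= (1 - Q^-1) / t.
  by move: hh; lra.
have e1 : (1 - P^-1) / t + ((m + 1) * Q)^-1 = (1 - P^-1 + t / ((m + 1) * Q)) / t.
  by field; rewrite !gt_eqF.
rewrite e1 ler_pM2r ?invr_gt0 //.
suff : t / ((m + 1) * Q) <= P^-1 - Q^-1 by lra.
have e2 : P^-1 - Q^-1 = (Q - P) / (P * Q) by field; rewrite !gt_eqF.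
rewrite e2.
rewrite ler_pdivrMr ?mulr_gt0 //.
have e4 : (Q - P) / (P * Q) * ((m + 1) * Q) = (Q - P) * (m + 1) / P.
  by field; rewrite !gt_eqF.
rewrite e4 ler_pdivlMr //.
have htt : 0 <= t * t by rewrite mulr_ge0 // ltW.
have : (m + 1 - t) * Q * (m + 1 + t) <= (m + 1) * Q * (m + 1).
  have := mulr_ge0 (ltW Q0) htt. nra.
have : P * (m + 1) * (m + 1 + t) <= (m + 1 - t) * Q * (m + 1 + t).
  by rewrite ler_wpM2r // addr_ge0 ?ltW.
nra.
Qed.
Lemma sum_mult (R : realType) (f : nat -> R) (l N : nat) : (0 < l)%N ->
  \sum_(i < N | (l %| i.+1)%N) f i.+1 = \sum_(j < N %/ l) f (l * j.+1)%N.
Proof.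
move=> l0; elim: N => [|N IH]; first by rewrite div0n !big_ord0.
rewrite (big_mkcond (fun i : 'I_N.+1 => (l %| i.+1)%N)) big_ord_recr /=.
rewrite -(big_mkcond (fun i : 'I_N => (l %| i.+1)%N)) IH divnS //.
case: (boolP (l %| N.+1)%N) => h /=.
  rewrite add1n big_ord_recr /=; congr (_ + f _).
  have e : (N %/ l).+1 = (N.+1 %/ l)%N by rewrite divnS // h.
  by rewrite e mulnC divnK.
by rewrite addr0 add0n.
Qed.

Lemma schur (R : realType) (N : nat) (L : 'I_N -> 'I_N -> R) (w x : 'I_N -> R) (lam : R) :
  (forall i j, L i j = L j i) -> (forall i j, 0 <= L i j) -> (forall i, 0 < w i) ->
  (forall i, \sum_j L i j * w j <= lam * w i) ->
  \sum_i \sum_j x i * x j * L i j <= lam * \sum_i x i ^+ 2.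
Proof.
move=> Ls L0 w0 row.
have pw : forall i j, x i * x j * L i j <=
   (L i j * (x i ^+ 2 / w i * w j) + L j i * (x j ^+ 2 / w j * w i)) / 2.
  move=> i j; rewrite (Ls j i).
  have a0 := w0 i; have b0 := w0 j.
  have e : (L i j * (x i ^+ 2 / w i * w j) + L i j * (x j ^+ 2 / w j * w i)) / 2
      - x i * x j * L i j = L i j * (x i * w j - x j * w i) ^+ 2 / (2 * w i * w j).
    by field; rewrite !gt_eqF.
  rewrite -subr_ge0 e; apply: divr_ge0; first by apply: mulr_ge0 => //; exact: sqr_ge0.
  by apply: mulr_ge0; [apply: mulr_ge0 => //; exact: ltW | exact: ltW].
apply: (le_trans (ler_sum _ (fun i _ => ler_sum _ (fun j _ => pw i j)))).
under eq_bigr do under eq_bigr do rewrite mulrDl.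
under eq_bigr do rewrite big_split /=.
rewrite big_split /=.
have -> : \sum_i \sum_j L j i * (x j ^+ 2 / w j * w i) / 2 =
          \sum_i \sum_j L i j * (x i ^+ 2 / w i * w j) / 2 by rewrite exchange_big.
have h2 : \sum_i \sum_j L i j * (x i ^+ 2 / w i * w j) / 2 =
   (\sum_i \sum_j L i j * (x i ^+ 2 / w i * w j)) / 2.
  by rewrite mulr_suml; apply: eq_bigr => i _; rewrite mulr_suml.
rewrite h2.
have h : \sum_i \sum_j L i j * (x i ^+ 2 / w i * w j) <= lam * \sum_i x i ^+ 2.
  rewrite mulr_sumr; apply: ler_sum => i _.
  have e : forall j, L i j * (x i ^+ 2 / w i * w j) = x i ^+ 2 / w i * (L i j * w j).
    by move=> j; ring.
  under eq_bigr do rewrite e.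
  rewrite -mulr_sumr.
  have xi : 0 <= x i ^+ 2 / w i by rewrite divr_ge0 ?sqr_ge0 // ltW.
  apply: (le_trans (ler_wpM2l xi (row i))).
  by apply: eqle; field; rewrite gt_eqF.
lra.
Qed.
Lemma pRD (R : realType) (x a b : R) : 0 < x -> x `^ (a + b) = x `^ a * x `^ b.
Proof. by move=> x0; rewrite powRD // (gt_eqF x0) implybT. Qed.

Lemma pRinv (R : realType) (x a : R) : 0 < x -> (x^-1) `^ a = (x `^ a)^-1.
Proof.
move=> x0; rewrite -powR_inv1 ?ltW // -powRrM mulN1r powRN //.
Qed.

Lemma pRn_gt0 (R : realType) (n : nat) (a : R) : (0 < n)%N -> 0 < n%:R `^ a.
Proof. by move=> n0; apply: powR_gt0; rewrite ltr0n. Qed.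

Definition Bk (R : realType) (al : R) (d m : nat) : R :=
  if (d %| m)%N then (((m %/ d)%:R) `^ al)^-1 else 0.
Arguments Bk {R} al d m.

Lemma Bk_ge0 (R : realType) (al : R) (d m : nat) : 0 <= Bk al d m.
Proof. by rewrite /Bk; case: ifP => // _; rewrite invr_ge0 powR_ge0. Qed.

Lemma kernel_le (R : realType) (al : R) (N m n : nat) : (0 < m)%N -> (0 < n)%N ->
  (m <= N)%N -> gcd_kernel al m n <= \sum_(k < N) Bk al k.+1 m * Bk al k.+1 n.
Proof.
move=> m0 n0 mN.
set g := gcdn m n.
have g0 : (0 < g)%N by rewrite gcdn_gt0 m0.
have gN : (g.-1 < N)%N.
  by rewrite prednK // (leq_trans _ mN) // dvdn_leq // dvdn_gcdl.
rewrite (bigD1 (Ordinal gN)) //= prednK //.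
rewrite -[X in X <= _]addr0; apply: lerD; last first.
  by apply: sumr_ge0 => k _; apply: mulr_ge0; apply: Bk_ge0.
rewrite /Bk /gcd_kernel dvdn_gcdl dvdn_gcdr -/g.
have gm := dvdn_gcdl m n; have gn := dvdn_gcdr m n.
rewrite -/g in gm gn.
set a := (m %/ g)%N; set b := (n %/ g)%N.
have a0 : (0 < a)%N by rewrite divn_gt0 // dvdn_leq.
have b0 : (0 < b)%N by rewrite divn_gt0 // dvdn_leq.
have mnE : (m * n)%N = (a * b * (g * g))%N.
  by rewrite /a /b -{1}(divnK gm) -{1}(divnK gn); ring.
have gpos : 0 < g%:R :> R by rewrite ltr0n.
have e2 : 2 * al = al + al by ring.
rewrite mnE !natrM powRM ?mulr_ge0 // powRM // powRM // e2 pRD //.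
have := @pRn_gt0 R a al a0; have := @pRn_gt0 R b al b0; have := powR_gt0 al gpos.
move=> h1 h2 h3.
apply: eqle; field; rewrite !gt_eqF //.
Qed.
Lemma inner_le (R : realType) (al : R) (N d d' : nat) : 0 < al -> al < 1 / 2 ->
  (0 < d)%N -> (0 < d')%N ->
  \sum_(j < N) Bk al d j.+1 * Bk al d' j.+1 <=
  N%:R `^ (1 - 2 * al) / (1 - 2 * al) * (gcdn d d')%:R * (((d * d')%:R) `^ (1 - al))^-1.
Proof.
move=> al0 al1 d0 d0'.
set dl := 1 - 2 * al.
have dl0 : 0 < dl by rewrite /dl; lra.
set l := lcmn d d'.
have l0 : (0 < l)%N by rewrite lcmn_gt0 d0.
set X : R := (d * d')%:R `^ al.
have X0 : 0 < X by apply: pRn_gt0; rewrite muln_gt0 d0.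
have step1 : forall j : 'I_N, Bk al d j.+1 * Bk al d' j.+1 =
    if (l %| j.+1)%N then X * (((j.+1)%:R `^ (2 * al))^-1) else 0.
  move=> j; rewrite /Bk /l dvdn_lcm.
  case hd: (d %| j.+1)%N; case hd': (d' %| j.+1)%N; rewrite ?mul0r ?mulr0 //=.
  set a := (j.+1 %/ d)%N; set b := (j.+1 %/ d')%N.
  have a0 : (0 < a)%N by rewrite divn_gt0 // dvdn_leq.
  have b0 : (0 < b)%N by rewrite divn_gt0 // dvdn_leq.
  have nE : (j.+1 * j.+1)%N = (a * b * (d * d'))%N.
    by rewrite -{1}(divnK hd) -{2}(divnK hd') /a /b; ring.
  have e2 : 2 * al = al + al by ring.
  rewrite e2 pRD ?ltr0n // -powRM // -natrM nE !natrM !powRM ?mulr_ge0 //.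
  have := @pRn_gt0 R a al a0; have := @pRn_gt0 R b al b0.
  move=> h1 h2; rewrite /X natrM powRM //.
  have := @pRn_gt0 R d al d0; have := @pRn_gt0 R d' al d0'.
  move=> h3 h4; field; rewrite !gt_eqF //.
rewrite (eq_bigr _ (fun j _ => step1 j)) -big_mkcond /=.
rewrite (@sum_mult R (fun n => X * ((n%:R `^ (2 * al))^-1)) l N l0) /=.
under eq_bigr do rewrite natrM powRM // invfM.
rewrite -mulr_sumr -mulr_sumr.
have hs := @sum_pow_le R (2 * al) (N %/ l) ltac:(apply/andP; split; lra).
rewrite -/dl in hs.
have lpos : 0 < l%:R :> R by rewrite ltr0n.
have Lp : 0 < l%:R `^ (2 * al) :> R by apply: powR_gt0.
have Lpi : 0 < (l%:R `^ (2 * al))^-1 :> R by rewrite invr_gt0.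
apply: (le_trans (ler_wpM2l (ltW X0) (ler_wpM2l (ltW Lpi) hs))).
have hNl : (N %/ l)%:R `^ dl <= N%:R `^ dl * (l%:R `^ dl)^-1 :> R.
  rewrite -pRinv // -powRM ?invr_ge0 //.
  apply: ge0_ler_powR; [exact: ltW | by rewrite nnegrE | by rewrite nnegrE divr_ge0 | ].
  rewrite ler_pdivlMr // -natrM ler_nat; exact: leq_divM.
have : X * ((l%:R `^ (2 * al))^-1 * ((N %/ l)%:R `^ dl / dl)) <=
       X * ((l%:R `^ (2 * al))^-1 * (N%:R `^ dl * (l%:R `^ dl)^-1 / dl)).
  apply: ler_wpM2l; first exact: ltW.
  apply: ler_wpM2l; first by rewrite invr_ge0 ltW.
  by apply: ler_wpM2r; [rewrite invr_ge0 ltW | ].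
move/le_trans; apply.
have hl : l%:R `^ (2 * al) * l%:R `^ dl = l%:R :> R.
  by rewrite -pRD // /dl (_ : 2 * al + (1 - 2 * al) = 1) ?powRr1 ?ltW //; ring.
have hlg : (l * gcdn d d')%N = (d * d')%N by rewrite muln_lcm_gcd.
have g0 : (0 < gcdn d d')%N by rewrite gcdn_gt0 d0.
have hX1 : (d * d')%:R `^ (1 - al) * X = (d * d')%:R :> R.
  by rewrite /X -pRD ?ltr0n ?muln_gt0 ?d0 // (_ : 1 - al + al = 1) ?powRr1 //; ring.
have Ld : 0 < l%:R `^ dl :> R by apply: powR_gt0.
have Dp : 0 < (d * d')%:R `^ (1 - al) :> R by apply: pRn_gt0; rewrite muln_gt0 d0.
have Np : 0 <= N%:R `^ dl :> R by apply: powR_ge0.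
apply: eqle.
have gp : 0 < (gcdn d d')%:R :> R by rewrite ltr0n.
move: hlg => /(congr1 (fun k : nat => k%:R : R)); rewrite natrM => hlg.
set A := l%:R `^ (2 * al) in hl Lp *.
set Bv := l%:R `^ dl in hl Ld *.
set Y := (d * d')%:R `^ (1 - al) in hX1 Dp *.
have eX : X = A * Bv * (gcdn d d')%:R / Y.
  apply: (@mulfI _ Y); first by rewrite gt_eqF.
  by rewrite hX1 hl hlg; field; rewrite gt_eqF.
rewrite eX; field; rewrite !gt_eqF //.
Qed.
Lemma gcd_sum_le (R : realType) (t : R) (N d : nat) : 0 < t <= 1 -> (0 < d)%N ->
  \sum_(k < N) (gcdn d k.+1)%:R * (((k.+1)%:R) `^ (1 + t))^-1 <= (1 + t^-1) * (tau d)%:R.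
Proof.
move=> /andP[t0 t1] d0.
set w := fun k : nat => ((k%:R : R) `^ (1 + t))^-1.
have w0 : forall k, 0 <= w k by move=> k; rewrite /w invr_ge0 powR_ge0.
have pa : forall k : 'I_N, (gcdn d k.+1)%:R * w k.+1 <=
    \sum_(e < d.+1) (if (e %| d)%N && (e %| k.+1)%N then e%:R * w k.+1 else 0).
  move=> k.
  have gd : (gcdn d k.+1 < d.+1)%N by rewrite ltnS dvdn_leq // dvdn_gcdl.
  rewrite (bigD1 (Ordinal gd)) //= dvdn_gcdl dvdn_gcdr /=.
  rewrite -[X in X <= _]addr0; apply: lerD => //.
  apply: sumr_ge0 => e _; case: ifP => // _; apply: mulr_ge0 => //.
apply: (le_trans (ler_sum _ (fun k _ => pa k))).
rewrite exchange_big /=.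
have pc : forall e : 'I_d.+1,
   \sum_(k < N) (if (e %| d)%N && (e %| k.+1)%N then e%:R * w k.+1 else 0)
   <= (if (e %| d)%N then 1 + t^-1 else 0).
  move=> e; case ed: (e %| d)%N => /=; last by rewrite big1.
  have e0 : (0 < e)%N by case: (nat_of_ord e) ed => //; rewrite dvd0n => /eqP d00; move: d0; rewrite d00.
  rewrite -big_mkcond /=.
  rewrite (@sum_mult R (fun n => e%:R * w n) e N e0) /= -mulr_sumr.
  under eq_bigr do rewrite /w natrM powRM // invfM.
  rewrite -mulr_sumr mulrA.
  have ep : 0 < e%:R :> R by rewrite ltr0n.
  have hs := @sum_pow1_le R t (N %/ e) ltac:(by apply/andP).
  have ee : e%:R * ((e%:R `^ (1 + t))^-1) <= 1 :> R.
    rewrite pRD // powRr1 // invfM mulrA mulfV ?gt_eqF // mul1r.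
    rewrite invr_le1 ?powR_gt0 //; last by rewrite unitfE gt_eqF // powR_gt0.
    have h1 : (1 : R) `^ t = 1 by rewrite powR1.
    rewrite -[X in X <= _]h1.
    apply: ge0_ler_powR; [exact: ltW | by rewrite nnegrE | by rewrite nnegrE | ].
    by rewrite ler1n.
  have Z0 : 0 <= \sum_(i < N %/ e) ((i.+1)%:R `^ (1 + t))^-1 :> R.
    by apply: sumr_ge0 => i _; rewrite invr_ge0 powR_ge0.
  apply: (le_trans (ler_pM _ Z0 ee hs)); first by rewrite mulr_ge0 // invr_ge0 powR_ge0.
  by rewrite mul1r.
apply: (le_trans (ler_sum _ (fun e _ => pc e))).
rewrite /tau natr_sum mulr_sumr; apply: ler_sum => e _.
by case: (e %| d)%N; rewrite ?mulr1 ?mulr0.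
Qed.
Definition qw (R : realType) (d : nat) : R := ((d%:R) `^ (1 / 2))^-1.
Arguments qw {R} d.
Definition pw (R : realType) (al : R) (N m : nat) : R :=
  \sum_(k < N) Bk al k.+1 m * qw k.+1.
Arguments pw {R} al N m.

Lemma key_le (R : realType) (al D : R) (N d : nat) : 0 < al -> al < 1 / 2 ->
  (forall n : nat, (0 < n)%N -> (tau n)%:R <= D * n%:R `^ (1 / 2 - al)) ->
  (0 < d)%N ->
  \sum_(j < N) Bk al d j.+1 * pw al N j.+1 <=
  (N%:R `^ (1 - 2 * al) / (1 - 2 * al) * (1 + (1 / 2 - al)^-1) * D) * qw d.
Proof.
move=> al0 al1 hD d0.
set t := 1 / 2 - al.
have t0 : 0 < t by rewrite /t; lra.
have t1 : t <= 1 by rewrite /t; lra.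
set c := N%:R `^ (1 - 2 * al) / (1 - 2 * al).
have c0 : 0 <= c by rewrite /c divr_ge0 ?powR_ge0 //; lra.
have dp : 0 < d%:R :> R by rewrite ltr0n.
rewrite /pw.
under eq_bigr do rewrite mulr_sumr.
rewrite exchange_big /=.
have s1 : forall k : 'I_N, \sum_(j < N) Bk al d j.+1 * (Bk al k.+1 j.+1 * qw k.+1) =
    qw k.+1 * \sum_(j < N) Bk al d j.+1 * Bk al k.+1 j.+1.
  move=> k; rewrite mulr_sumr; apply: eq_bigr => j _; ring.
under eq_bigr do rewrite s1.
have s2 : forall k : 'I_N, qw k.+1 * \sum_(j < N) Bk al d j.+1 * Bk al k.+1 j.+1 <=
    c * ((d%:R `^ (1 - al))^-1) * ((gcdn d k.+1)%:R * (((k.+1)%:R) `^ (1 + t))^-1).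
  move=> k.
  have q0 : 0 <= qw k.+1 :> R by rewrite /qw invr_ge0 powR_ge0.
  apply: (le_trans (ler_wpM2l q0 (@inner_le R al N d k.+1 al0 al1 d0 (ltn0Sn k)))).
  rewrite -/c /qw natrM powRM //.
  have kp : 0 < (k.+1)%:R :> R by rewrite ltr0n.
  have e1 : (k.+1)%:R `^ (1 + t) = (k.+1)%:R `^ (1 / 2) * (k.+1)%:R `^ (1 - al).
    by rewrite -pRD // /t; congr (_ `^ _); ring.
  rewrite e1.
  have := powR_gt0 (1 / 2) kp; have := powR_gt0 (1 - al) kp; have := powR_gt0 (1 - al) dp.
  move=> h1 h2 h3; apply: eqle; field; rewrite !gt_eqF //.
apply: (le_trans (ler_sum _ (fun k _ => s2 k))).
rewrite -mulr_sumr.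
have dq : 0 <= c * (d%:R `^ (1 - al))^-1 by rewrite mulr_ge0 // invr_ge0 powR_ge0.
apply: (le_trans (ler_wpM2l dq (@gcd_sum_le R t N d ltac:(by apply/andP) d0))).
have Z0 : 0 <= 1 + t^-1 by rewrite addr_ge0 // invr_ge0 ltW.
apply: (le_trans (ler_wpM2l dq (ler_wpM2l Z0 (hD d d0)))).
rewrite -/t /qw.
have e2 : d%:R `^ (1 - al) = d%:R `^ (1 / 2) * d%:R `^ t.
  by rewrite -pRD // /t; congr (_ `^ _); lra.
rewrite e2.
have := powR_gt0 (1 / 2) dp; have := powR_gt0 t dp.
move=> h1 h2; apply: eqle; field; rewrite !gt_eqF //.
Qed.
Lemma core_bound (R : realType) (al : R) : 0 < al -> al < 1 / 2 ->
  exists C : R, forall N : nat, (0 < N)%N -> forall x : 'I_N -> R, (forall i, 0 <= x i) ->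
    \sum_(i < N) \sum_(j < N) x i * x j * gcd_kernel al i.+1 j.+1
      <= C * N%:R `^ (1 - 2 * al) * \sum_(i < N) x i ^+ 2.
Proof.
move=> al0 al1.
have u0 : 0 < 1 / 2 - al by lra.
have [D [D0 hD]] := @tau_bound R _ u0.
exists ((1 + (1 / 2 - al)^-1) * D / (1 - 2 * al)).
move=> N N0 x x0.
set Lam := N%:R `^ (1 - 2 * al) / (1 - 2 * al) * (1 + (1 / 2 - al)^-1) * D.
have eL : (1 + (1 / 2 - al)^-1) * D / (1 - 2 * al) * N%:R `^ (1 - 2 * al) = Lam.
  rewrite /Lam; field; lra.
rewrite eL.
set L := fun i j : 'I_N => \sum_(k < N) Bk al k.+1 i.+1 * Bk al k.+1 j.+1.
have step : \sum_(i < N) \sum_(j < N) x i * x j * gcd_kernel al i.+1 j.+1 <=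
            \sum_(i < N) \sum_(j < N) x i * x j * L i j.
  apply: ler_sum => i _; apply: ler_sum => j _.
  apply: ler_wpM2l; first by rewrite mulr_ge0.
  by apply: kernel_le => //; exact: ltn_ord.
apply: (le_trans step).
apply: (@schur R N L (fun i => pw al N i.+1) x Lam).
- by move=> i j; apply: eq_bigr => k _; rewrite mulrC.
- by move=> i j; apply: sumr_ge0 => k _; apply: mulr_ge0; apply: Bk_ge0.
- move=> i; rewrite /pw (bigD1 (Ordinal N0)) //=.
  apply: (@lt_le_trans _ _ (Bk al 1 i.+1 * qw 1 + 0)).
    rewrite addr0 /Bk dvd1n divn1 /qw powR1 invr1 mulr1 invr_gt0.
    by apply: powR_gt0; rewrite ltr0n.
  apply: lerD => //; apply: sumr_ge0 => k _; apply: mulr_ge0; first exact: Bk_ge0.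
  by rewrite /qw invr_ge0 powR_ge0.
- move=> i.
  rewrite /L.
  under eq_bigr do rewrite mulr_suml.
  rewrite exchange_big /=.
  have e : forall k : 'I_N, \sum_(j < N) Bk al k.+1 i.+1 * Bk al k.+1 j.+1 * pw al N j.+1
        = Bk al k.+1 i.+1 * \sum_(j < N) Bk al k.+1 j.+1 * pw al N j.+1.
    by move=> k; rewrite mulr_sumr; apply: eq_bigr => j _; rewrite mulrA.
  under eq_bigr do rewrite e.
  rewrite /pw mulr_sumr; apply: ler_sum => k _.
  rewrite -/(pw al N) mulrCA.
  apply: ler_wpM2l; first exact: Bk_ge0.
  exact: (@key_le R al D N k.+1 al0 al1 hD (ltn0Sn k)).
Qed.
Lemma gcd_kernel_sym (R : realType) (al : R) (m n : nat) :
  gcd_kernel al m n = gcd_kernel al n m.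
Proof. by rewrite /gcd_kernel gcdnC mulnC. Qed.

Lemma gcd_kernel_ge0 (R : realType) (al : R) (m n : nat) : 0 <= gcd_kernel al m n.
Proof. by rewrite /gcd_kernel divr_ge0 ?powR_ge0. Qed.


Lemma conj_term (R : realType) (u v : R[i]) (k : R) :
  conjc (u * Num.conj v * k%:C) = v * Num.conj u * k%:C.
Proof.
case: u => a b; case: v => c d.
apply/eqP; rewrite eq_complex /=.
apply/andP; split; apply/eqP; ring.
Qed.

Theorem theorem2 (R : realType) (alpha : R) :
  0 < alpha -> alpha < 1 / 2 ->
  exists C : R, forall N : nat, (0 < N)%N ->
    forall a : 'I_N -> R[i],
      \sum_(i < N) `|a i| ^+ 2 = 1 ->
      \sum_(i < N) \sum_(j < N)
          a i * (a j)^* * (gcd_kernel alpha i.+1 j.+1)%:C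
        <= (C * N%:R `^ (1 - 2 * alpha))%:C.
Proof.
move=> al0 al1.
have [C hC] := @core_bound R alpha al0 al1.
exists C => N N0 a ha.
set K := fun i j : 'I_N => gcd_kernel alpha i.+1 j.+1.
set x := fun i : 'I_N => Num.sqrt ((complex.Re (a i)) ^+ 2 + (complex.Im (a i)) ^+ 2).
have nx : forall i, `|a i| = (x i)%:C by move=> i; rewrite normc_def.
have x0 : forall i, 0 <= x i by move=> i; exact: sqrtr_ge0.
have hx : \sum_(i < N) x i ^+ 2 = 1.
  apply: (@complexI R); rewrite rmorph1 -ha rmorph_sum; apply: eq_bigr => i _.
  by rewrite nx rmorphXn.
have hb := hC N N0 x x0; rewrite hx mulr1 in hb.
set Q := \sum_(i < N) \sum_(j < N) a i * (a j)^* * (K i j)%:C.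
have QJ : conjc Q = Q.
  rewrite /Q rmorph_sum /= exchange_big; apply: eq_bigr => j _.
  rewrite rmorph_sum; apply: eq_bigr => i _ /=.
  by rewrite conj_term /K gcd_kernel_sym.
have Qreal : Q \is Num.real.
  have hI : (complex.Im Q)%:C = 0 by rewrite ImJ_sub QJ subrr !mul0r.
  move: hI => [] hI.
  by case: Q QJ hI => a1 b1 _ /= ->; rewrite complex_real.
apply: (le_trans (real_ler_norm Qreal)).
apply: (le_trans (ler_norm_sum _ _ _)).
apply: (@le_trans _ _ (\sum_(i < N) \sum_(j < N) (x i * x j * K i j)%:C)).
  apply: ler_sum => i _; apply: (le_trans (ler_norm_sum _ _ _)).
  apply: ler_sum => j _.
  rewrite !normrM normcJ !nx ger0_norm ?ler0c ?gcd_kernel_ge0 //.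
  by rewrite !rmorphM.
have e : \sum_(i < N) \sum_(j < N) (x i * x j * K i j)%:C =
    (\sum_(i < N) \sum_(j < N) x i * x j * K i j)%:C.
  by rewrite rmorph_sum; apply: eq_bigr => i _; rewrite rmorph_sum.
by rewrite e lecR.
Qed.
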